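(* The function $\varphi\colon[0,1]\to[0,1]$, $\varphi(t)=\max(t,1/2)$, is $\mathfrak{cm}$-nonexpansive (with respect to the absolute value on $\mathbb{R}$): for all $n\in\mathbb{N}$, $s\in[0,1]$ and sequences $(t_i)_{i=1}^\infty\subset[0,1]$, $$\limsup_{i\to\infty}\sup_{A\subset\{1,\dots,n\}}\Big|\sum_{k\in A}(\varphi(t_{i+k})-\varphi(s))\Big|\le\limsup_{i\to\infty}\sup_{A\subset\{1,\dots,n\}}\Big|\sum_{k\in A}(t_{i+k}-s)\Big|.$$ *)

(* Defs.v *)
From mathcomp Require Import all_boot all_order all_algebra.
From mathcomp Require Import all_classical all_reals all_analysis.
Set Implicit Arguments. Unset Strict Implicit. Unset Printing Implicit Defensive.
Import Order.TTheory GRing.Theory Num.Theory.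
Local Open Scope ring_scope.

Definition phi_half {R : realType} (t : R) : R := Num.max t (2^-1).

(* sup_{A subset {1..n}} | sum_{k in A} (f (i+k) - c) |.
   Index k in {1..n} is encoded as k : 'I_n standing for k.+1.
   The empty set contributes 0, so max with base 0 is harmless. *)
Definition cm_sup {R : realType} (n : nat) (f : nat -> R) (c : R) (i : nat) : R :=
  \big[Num.max/0]_(A : {set 'I_n}) `| \sum_(k in A) (f (i + k.+1)%N - c) |.

(* Main.v *)
Require Import Defs.
From mathcomp Require Import all_boot all_order all_algebra.
From mathcomp Require Import all_classical all_reals all_analysis.
From mathcomp Require Import lra.
Import Order.TTheory GRing.Theory Num.Theory.
Local Open Scope ring_scope.

Lemma phi_pt (R : realType) (a b : R) :
  (0 < phi_half a - phi_half b -> phi_half a - phi_half b <= a - b) /\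
  (phi_half a - phi_half b < 0 -> a - b <= phi_half a - phi_half b).
Proof.
rewrite /phi_half.
have h2 : (0:R) < 2^-1 by rewrite invr_gt0.
have [ha|ha] := leP a 2^-1; have [hb|hb] := leP b 2^-1; split => ?; lra.
Qed.

Lemma cm_sup_le (R : realType) (n : nat) (s : R) (t : nat -> R) i :
  cm_sup n (fun j => phi_half (t j)) (phi_half s) i <= cm_sup n t s i.
Proof.
rewrite /cm_sup.
have M0 : 0 <= \big[Num.max/0]_(A : {set 'I_n}) `| \sum_(k in A) (t (i + k.+1)%N - s) |.
  exact: bigmax_ge_id.
apply: bigmax_le => // A _.
set u := fun k : 'I_n => phi_half (t (i + k.+1)%N) - phi_half s.
set v := fun k : 'I_n => t (i + k.+1)%N - s.
rewrite -/(\sum_(k in A) u k).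
have [hpos|hneg] := leP 0 (\sum_(k in A) u k).
- rewrite ger0_norm //.
  pose B := [set k in A | 0 < u k].
  apply: le_trans (le_bigmax _ _ B); last first.
  apply: le_trans (ler_norm _).
  rewrite (bigID (fun k => 0 < u k)) /=.
  have h1 : \sum_(k in A | ~~ (0 < u k)) u k <= 0.
    by apply: sumr_le0 => k /andP[_]; rewrite -leNgt.
  have h2 : \sum_(k in A | 0 < u k) u k <= \sum_(k in B) v k.
    rewrite (eq_bigl (fun k => k \in B)); last by move=> k; rewrite !inE.
    by apply: ler_sum => k; rewrite inE => /andP[_ H]; exact: (proj1 (phi_pt _ _ _) H).
  lra.
- rewrite ltr0_norm //.
  pose B := [set k in A | u k < 0].
  apply: le_trans (le_bigmax _ _ B); last first.
  have hN : - (\sum_(k in B) v k) <= `|\sum_(k in B) v k|.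
    by rewrite -normrN ler_norm.
  apply: le_trans hN.
  rewrite (bigID (fun k => u k < 0)) /=.
  have h1 : 0 <= \sum_(k in A | ~~ (u k < 0)) u k.
    by apply: sumr_ge0 => k /andP[_]; rewrite -leNgt.
  have h2 : \sum_(k in B) v k <= \sum_(k in A | u k < 0) u k.
    rewrite [X in _ <= X](eq_bigl (fun k => k \in B)); last by move=> k; rewrite !inE.
    by apply: ler_sum => k; rewrite inE => /andP[_ H]; exact: (proj2 (phi_pt _ _ _) H).
  lra.
Qed.

Theorem proposition6p1 (R : realType) (n : nat) (s : R) (t : nat -> R) :
  0 <= s <= 1 ->
  (forall i, 0 <= t i <= 1) ->
  (limn_esup (fun i => (cm_sup n (fun j => phi_half (t j)) (phi_half s) i)%:E)
   <= limn_esup (fun i => (cm_sup n t s i)%:E))%E.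
Proof.
move=> _ _; rewrite !limn_esup_lim.
apply: lee_lim; [exact: is_cvg_esups|exact: is_cvg_esups|].
apply: nearW => m /=.
apply: ge_ereal_sup => _ [k hk <-].
apply: le_ereal_sup_tmp; exists (cm_sup n t s k)%:E; first by exists k.
by rewrite lee_fin cm_sup_le.
Qed.
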